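(* Assume the setting in the context and the condition $2c_3^2\tau^{1-\theta\alpha}\le c_0\beta^{\alpha}\epsilon$. Then there exist constants $\tilde c_1,\tilde c_2>0$, independent of $\beta,\theta,\tau$ and $\epsilon^{-1}$, such that for all $u,v\in\mathbb{R}$: \[ 2(u+v)f_\tau(u)+\tau\epsilon^{-1}|f_\tau(u)|^2\le-\frac{c_0}{2(1+\beta\tau^{\theta})^{2\alpha}}|u|^2+\tilde c_1(1+|v|^{2q})+\tilde c_2\beta^{\alpha}\tau^{\theta\alpha}, \] \[ |f_\tau(u)|\le|f(u)|,\qquad |f_\tau(u)-f(u)|\le\alpha\beta\tau^{\theta}|u|^{\frac{2q-2}{\alpha}}|f(u)|. \]
   Context: Let $q>1$ be an integer and $f(v)=-c_fv^{2q-1}+f_0(v)$, $v\in\mathbb{R}$, with $c_f>0$ and $f_0$ twice differentiable satisfying $|f_0(v)|\le c_{f,0}(1+|v|^{2q-2})$ and $|f_0'(v)|+|f_0''(v)|\le c_{f,1}(1+|v|^{2q-3})$. Fix constants $c_0,\dots,c_5>0$ such that $(u+v)f(u)\le-c_0|u|^{2q}+c_1|v|^{2q}+c_2$ and $|f(u)|\le c_3|u|^{2q-1}+c_4|u|+c_5$ for all $u,v\in\mathbb{R}$. Let $\epsilon\in(0,1]$, $\tau>0$, $\beta,\theta>0$, $\alpha\in(0,1/\theta)$, and $f_\tau(v):=f(v)/(1+\beta\tau^{\theta}|v|^{(2q-2)/\alpha})^{\alpha}$. *)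

(* Defs.v *)
From HB Require Import structures.
From mathcomp Require Import all_boot all_order all_algebra.
From mathcomp Require Import all_classical all_reals all_analysis.
Set Implicit Arguments. Unset Strict Implicit. Unset Printing Implicit Defensive.
Import Order.TTheory GRing.Theory Num.Theory.
Local Open Scope ring_scope.

(* The tamed nonlinearity
   f_tau(v) = f(v) / (1 + beta tau^theta |v|^((2q-2)/alpha))^alpha,
   real powers via MathComp-Analysis [powR] (with 0 `^ x = 0 for x <> 0). *)
Definition ftau (R : realType) (q : nat) (f : R -> R) (alpha beta theta tau : R)
  (v : R) : R :=
  f v / powR (1 + beta * powR tau theta * powR `|v| ((2 * q - 2)%:R / alpha)) alpha.

(* Main.v *)
Require Import Defs.
From HB Require Import structures.
From mathcomp Require Import all_boot all_order all_algebra.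
From mathcomp Require Import all_classical all_reals all_analysis.
From mathcomp Require Import ring lra zify.
Import Order.TTheory GRing.Theory Num.Theory.
Local Open Scope ring_scope.

Lemma bern_powR (R : realType) (x a : R) : 0 <= x -> 0 < a ->
  1 - a * x <= (powR (1 + x) a)^-1.
Proof.
move=> x0 a0; have h1 : 0 < 1 + x by lra.
rewrite -powRN /powR (gt_eqF h1).
apply: le_trans (expR_ge1Dx _).
have hl := le_ln1Dx (x := x) ltac:(lra).
have := ler_wpM2l (ltW a0) hl.
lra.
Qed.

Lemma powR_ge1 (R : realType) (b a : R) : 1 <= b -> 0 <= a -> 1 <= powR b a.
Proof. by move=> b1 a0; rewrite -(powRr0 b); apply: ler_powR. Qed.

Lemma nat_aux (q : nat) : (1 < q)%N ->
  [/\ (2 * q = (2 * q - 2) + 2)%N, ((2 * q - 1) * 2 = (2 * q - 2) + 2 * q)%N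
   & (2 * q - 2 = 2 + (2 * q - 2 - 2))%N].
Proof. move=> hq; split; lia. Qed.

Theorem proposition3p2 (R : realType) (q : nat) (cf cf0 cf1 : R) (f0 : R -> R)
  (c0 c1 c2 c3 c4 c5 : R) :
  (1 < q)%N -> 0 < cf -> 0 < cf0 -> 0 < cf1 ->
  (* f0 twice differentiable *)
  (forall v : R, derivable f0 v 1) ->
  (forall v : R, derivable (derive1 f0) v 1) ->
  (forall v : R, `|f0 v| <= cf0 * (1 + `|v| ^+ (2 * q - 2))) ->
  (forall v : R, `|derive1 f0 v| + `|derive1n 2 f0 v|
                   <= cf1 * (1 + `|v| ^+ (2 * q - 3))) ->
  0 < c0 -> 0 < c1 -> 0 < c2 -> 0 < c3 -> 0 < c4 -> 0 < c5 ->
  let f := fun v : R => - cf * v ^+ (2 * q - 1) + f0 v in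
  (forall u v : R, (u + v) * f u <= - c0 * `|u| ^+ (2 * q) + c1 * `|v| ^+ (2 * q) + c2) ->
  (forall u : R, `|f u| <= c3 * `|u| ^+ (2 * q - 1) + c4 * `|u| + c5) ->
  forall alpha : R, 0 < alpha ->
  exists ct1 ct2 : R, 0 < ct1 /\ 0 < ct2 /\
    forall eps beta theta tau : R,
      0 < eps -> eps <= 1 -> 0 < tau -> 0 < beta -> 0 < theta ->
      alpha < 1 / theta ->
      2 * c3 ^+ 2 * powR tau (1 - theta * alpha) <= c0 * powR beta alpha * eps ->
      forall u v : R,
        [/\ 2 * (u + v) * ftau q f alpha beta theta tau u
              + tau / eps * `|ftau q f alpha beta theta tau u| ^+ 2
            <= - (c0 / (2 * powR (1 + beta * powR tau theta) (2 * alpha))) * `|u| ^+ 2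
               + ct1 * (1 + `|v| ^+ (2 * q))
               + ct2 * powR beta alpha * powR tau (theta * alpha),
            `|ftau q f alpha beta theta tau u| <= `|f u| &
            `|ftau q f alpha beta theta tau u - f u|
              <= alpha * beta * powR tau theta
                 * powR `|u| ((2 * q - 2)%:R / alpha) * `|f u| ].
Proof.
move=> hq hcf hcf0 hcf1 _ _ _ _ h0 h1 h2 h3 h4 h5 f hdiss hgrow alpha ha.
have c3s : 0 < c3 ^+ 2 by rewrite exprn_gt0.
pose M1 := 2 * c0 * c4 ^+ 2 / c3 ^+ 2.
pose M2 := 2 * c0 * (c4 ^+ 2 + c5 ^+ 2) / c3 ^+ 2.
have hM1 : 0 < M1 by rewrite /M1 divr_gt0 // !mulr_gt0 // exprn_gt0.
have hM2 : 0 < M2.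
  by rewrite /M2 divr_gt0 // !mulr_gt0 // addr_gt0 // exprn_gt0.
exists (2 * c1 + 2 * c2 + M1 + c0 / 2), M2; split; first by lra.
split; first by [].
move=> eps beta theta tau he _ ht hb hth _ hcond u v.
set a := `|u|.
set m := (2 * q - 2)%N.
set p := (m%:R / alpha).
set x := beta * powR tau theta * powR a p.
set D := powR (1 + x) alpha.
set F := f u.
have eft : ftau q f alpha beta theta tau u = F * D^-1 by [].
rewrite eft.
set Di := D^-1.
have ha0 : 0 <= a by rewrite normr_ge0.
have hx0 : 0 <= x by rewrite mulr_ge0 ?powR_ge0 // mulr_ge0 ?powR_ge0 // ltW.
have hD1 : 1 <= D by apply: powR_ge1; lra.
have hD0 : 0 < D by lra.
have hDi0 : 0 < Di by rewrite invr_gt0.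
have hDi1 : Di <= 1 by rewrite invf_le1.
have hDD : D * Di = 1 by rewrite mulfV // gt_eqF.
have hF0 : 0 <= `|F| by rewrite normr_ge0.
have nFD : `|F * Di| = `|F| * Di by rewrite normrM (ger0_norm (ltW hDi0)).
rewrite nFD.
split; last first.
- rewrite (_ : F * Di - F = - (F * (1 - Di))); last by ring.
  rewrite normrN normrM (ger0_norm (x := 1 - Di)); last by lra.
  have := ler_wpM2l hF0 (@bern_powR _ _ _ hx0 ha).
  rewrite -/D -/Di /x; lra.
- nra.
- set V := `|v| ^+ (2 * q).
  have hV : 0 <= V by rewrite exprn_ge0 // normr_ge0.
  set A := a ^+ (2 * q).
  set B := a ^+ (2 * q - 1).
  set K := powR beta alpha * powR tau (theta * alpha).
  have hK : 0 < K by rewrite mulr_gt0 // powR_gt0.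
  have hA0 : 0 <= A by rewrite exprn_ge0.
  have hB0 : 0 <= B by rewrite exprn_ge0.
  have ham : 0 <= a ^+ m by rewrite exprn_ge0.
  have [n1 n2 n3] := @nat_aux _ hq.
  have hAm : A = a ^+ m * a ^+ 2 by rewrite /A -exprD n1.
  have hBm : B ^+ 2 = a ^+ m * A.
    by rewrite /B /A -exprM -exprD n2.
  have hpa : powR (powR a p) alpha = a ^+ m.
    by rewrite -powRrM /p divfK ?gt_eqF // powR_mulrn.
  have hxa : powR x alpha = K * a ^+ m.
    rewrite /x /K !powRM ?powR_ge0 ?(ltW hb) ?mulr_ge0 ?powR_ge0 ?(ltW hb) //.
    by rewrite hpa -powRrM.
  have hDK : K * a ^+ m <= D.
    rewrite -hxa; apply: ge0_ler_powR; rewrite ?nnegrE; try lra.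
  have hT : tau / eps * (2 * c3 ^+ 2) <= c0 * K.
    have et : tau = powR tau (1 - theta * alpha) * powR tau (theta * alpha).
      by rewrite -powRD ?subrK ?powRr1 ?(ltW ht) // gt_eqF // implybT.
    have := ler_wpM2r (powR_ge0 tau (theta * alpha)) hcond.
    move=> hh; rewrite /K.
    rewrite (_ : tau / eps * (2 * c3 ^+ 2) =
      (2 * c3 ^+ 2 * powR tau (1 - theta * alpha) * powR tau (theta * alpha)) / eps);
      last by rewrite {1}et; ring.
    rewrite ler_pdivrMr //; apply: (le_trans hh); rewrite le_eqVlt; apply/orP; left; apply/eqP; ring.
  have hd : (u + v) * F <= - c0 * A + c1 * V + c2 := hdiss u v.
  have b1 : 2 * (u + v) * (F * Di) <= - 2 * c0 * A * Di + 2 * c1 * V + 2 * c2.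
    have := ler_wpM2l (ltW hDi0) hd.
    have : Di * (c1 * V + c2) <= c1 * V + c2.
      by rewrite ler_piMl // addr_ge0 // ?mulr_ge0 // ltW.
    lra.
  have hg : `|F| <= c3 * B + c4 * a + c5 := hgrow u.
  clearbody F.
  have hF2 : `|F| ^+ 2 <= 2 * c3 ^+ 2 * B ^+ 2 + 4 * c4 ^+ 2 * a ^+ 2 + 4 * c5 ^+ 2.
    have : `|F| ^+ 2 <= (c3 * B + c4 * a + c5) ^+ 2.
      by rewrite ler_pXn2r // nnegrE; lra.
    have := sqr_ge0 (c3 * B - (c4 * a + c5)).
    have := sqr_ge0 (c4 * a - c5).
    lra.
  set T := tau / eps.
  have hT0 : 0 <= T by rewrite /T divr_ge0 // ltW.
  have e1 : T * (`|F| * Di) ^+ 2 <=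
      T * (2 * c3 ^+ 2 * B ^+ 2 + 4 * c4 ^+ 2 * a ^+ 2 + 4 * c5 ^+ 2) * Di ^+ 2.
    rewrite exprMn mulrA; apply: ler_wpM2r; first by rewrite exprn_ge0 // ltW.
    exact: ler_wpM2l.
  set W := (B ^+ 2 * Di ^+ 2 + 2 * c4 ^+ 2 / c3 ^+ 2 * (a ^+ 2 * Di ^+ 2)
            + 2 * c5 ^+ 2 / c3 ^+ 2 * Di ^+ 2).
  have e2 : T * (2 * c3 ^+ 2 * B ^+ 2 + 4 * c4 ^+ 2 * a ^+ 2 + 4 * c5 ^+ 2) * Di ^+ 2
      = (T * (2 * c3 ^+ 2)) * W.
    by rewrite /W; field; rewrite gt_eqF.
  have hW : 0 <= W.
    rewrite /W; apply: addr_ge0; first apply: addr_ge0.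
    - exact: mulr_ge0 (sqr_ge0 B) (sqr_ge0 Di).
    - exact: mulr_ge0 (divr_ge0 (mulr_ge0 (ler0n _ 2) (sqr_ge0 c4)) (sqr_ge0 c3))
        (mulr_ge0 (sqr_ge0 a) (sqr_ge0 Di)).
    - exact: mulr_ge0 (divr_ge0 (mulr_ge0 (ler0n _ 2) (sqr_ge0 c5)) (sqr_ge0 c3))
        (sqr_ge0 Di).
  have e3 : (T * (2 * c3 ^+ 2)) * W <= c0 * K * W by apply: ler_wpM2r.
  have p1 : K * (B ^+ 2 * Di ^+ 2) <= A * Di.
    rewrite hBm (_ : K * (a ^+ m * A * Di ^+ 2) = (K * a ^+ m * Di) * (A * Di));
      last by ring.
    apply: ler_piMl; first exact: mulr_ge0 hA0 (ltW hDi0).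
    by rewrite -hDD ler_wpM2r // ltW.
  have p2 : K * (a ^+ 2 * Di ^+ 2) <= 1 + K.
    have [al1|ag1] := lerP a 1.
      have : a ^+ 2 * Di ^+ 2 <= 1.
        rewrite -exprMn; apply: exprn_ile1; first exact: mulr_ge0 ha0 (ltW hDi0).
        exact: mulr_ile1 ha0 (ltW hDi0) al1 hDi1.
      move=> hh; have := ler_wpM2l (ltW hK) hh; lra.
    have hm2 : a ^+ 2 <= a ^+ m.
      rewrite /m n3.
      rewrite exprD ler_peMr ?exprn_ge0 //.
      by apply: exprn_ege1; apply: ltW.
    have : K * a ^+ 2 <= D by apply: le_trans hDK; apply: ler_wpM2l => //; apply: ltW.
    move=> hh; have := ler_wpM2r (exprn_ge0 2 (ltW hDi0)) hh.
    have e : D * Di ^+ 2 = Di by rewrite expr2 mulrA hDD mul1r.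
    lra.
  have p3 : K * Di ^+ 2 <= K.
    apply: ler_piMr; first exact: ltW.
    exact: exprn_ile1 (ltW hDi0) hDi1.
  have b2 : T * (`|F| * Di) ^+ 2 <= c0 * A * Di + M1 + M2 * K.
    have hc0 := ltW h0.
    have q1 := ler_wpM2l hc0 p1.
    have q2 := ler_wpM2l (ltW hM1) p2.
    have q3 := ler_wpM2l (mulr_ge0 hc0 (divr_ge0 (mulr_ge0 (ler0n _ 2) (exprn_ge0 2 (ltW h5))) (ltW c3s))) p3.
    have e4 : c0 * K * W = c0 * (K * (B ^+ 2 * Di ^+ 2)) + M1 * (K * (a ^+ 2 * Di ^+ 2))
       + c0 * (2 * c5 ^+ 2 / c3 ^+ 2) * (K * Di ^+ 2) by rewrite /W /M1; ring.
    have e5 : M2 * K = M1 * K + c0 * (2 * c5 ^+ 2 / c3 ^+ 2) * K by rewrite /M2 /M1; ring.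
    lra.
  clear e1 e2 e3 hW p1 p2 p3 hF2 hd hg hT hBm hxa.
  set P := powR (1 + beta * powR tau theta) alpha.
  set P2 := powR (1 + beta * powR tau theta) (2 * alpha).
  have hbt : 0 <= beta * powR tau theta by rewrite mulr_ge0 ?powR_ge0 // ltW.
  have hP1 : 1 <= P by apply: powR_ge1; lra.
  have hPP2 : P <= P2 by apply: ler_powR; lra.
  clearbody W T V A B P2.
  have b3 : - c0 * A * Di <= - (c0 / (2 * P2)) * a ^+ 2 + c0 / 2.
    have hP2 : 0 < P2 by lra.
    have [al1|ag1] := lerP a 1.
      have : a ^+ 2 <= 1 by rewrite exprn_ile1.
      have : c0 / (2 * P2) <= c0 / 2.
        by rewrite ler_pM2l // lef_pV2 ?posrE; lra.
      move=> h6 h7.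
      have := ler_wpM2l (divr_ge0 (ltW h0) (ltW (mulr_gt0 (ltr0n _ 2) hP2))) h7.
      have : 0 <= A * Di by rewrite mulr_ge0 // ltW.
      have : 0 <= c0 * (A * Di) by rewrite mulr_ge0 // ?mulr_ge0 // ltW.
      lra.
    have hpa1 : 1 <= powR a p.
      apply: powR_ge1; first by apply: ltW.
      by rewrite /p divr_ge0 // ltW.
    have hDP : D <= P * a ^+ m.
      rewrite -hpa /P -powRM ?powR_ge0 //; last by lra.
      apply: ge0_ler_powR; rewrite ?nnegrE; try (apply: ltW; exact ha); try lra.
        by rewrite mulr_ge0 ?powR_ge0 //; lra.
      by rewrite /x mulrDl mul1r lerD2r.
    have eDi : Di = D^-1 by [].
    clearbody Di D x P p.
    have hP0 : 0 < P by lra.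
    have hamp : 0 < a ^+ m by rewrite exprn_gt0 //; lra.
    have hPm : 0 < P * a ^+ m by apply: mulr_gt0.
    have hDi : (P * a ^+ m)^-1 <= Di by rewrite eDi lef_pV2 ?posrE.
    have hADi : a ^+ 2 / P <= A * Di.
      have := ler_wpM2l (hA0) hDi.
      rewrite (_ : A * (P * a ^+ m)^-1 = a ^+ 2 / P) //.
      rewrite hAm; field; rewrite !gt_eqF //; lra.
    have : a ^+ 2 / (2 * P2) <= a ^+ 2 / P.
      rewrite ler_pM2l ?exprn_gt0 //; last lra.
      rewrite lef_pV2 ?posrE; lra.
    move=> h6.
    have := ler_wpM2l (ltW h0) (le_trans h6 hADi).
    have eqc : c0 / (2 * P2) * a ^+ 2 = c0 * (a ^+ 2 / (2 * P2)) by ring.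
    lra.
  have hVV : 0 <= (2 * c2 + M1 + c0 / 2) * V by rewrite mulr_ge0 //; lra.
  rewrite -/T.
  have eK : M2 * powR beta alpha * powR tau (theta * alpha) = M2 * K by rewrite /K; ring.
  rewrite eK.
  clearbody K P D Di x p m a.
  lra.
Qed.
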